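(* Let $\{x_t\}_{t\ge0}$ be an aperiodic and $\varphi$-irreducible Markov chain on $\mathbb{X}$ with transition kernel $P$, and let $\{\mathcal{T}_n\}_{n\ge0}$ be a non-decreasing sequence of random times with $\mathcal{T}_0=0$ that is independent of $\{x_t\}$. Then any set $C$ that is small for $\{x_t\}$ is petite for the sampled process $\{x_{\mathcal{T}_n}\}$.
   Context: A set $C$ of positive maximal-irreducibility measure is $(m,\delta,\nu)$-small for $\{x_t\}$ if $P^m(x,B)\ge\delta\nu(B)$ for all $x\in C$ and Borel $B$, for some $m\ge1$, $\delta\in(0,1)$ and positive measure $\nu$. A set is petite for a process with one-step transition kernel $Q$ if $\sum_{n\ge0}a(n)Q^n(x,B)\ge\kappa(B)$ for all $x\in C$ and Borel $B$, for some probability distribution $a$ on $\mathbb{Z}_+$ and nonzero positive measure $\kappa$; for the sampled process the relevant kernel is $x\mapsto P^{\mathcal{T}_1}(x,\cdot)=\sum_k P(\mathcal{T}_1=k)P^k(x,\cdot)$. *)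

(* Defs.v *)
From HB Require Import structures.
From mathcomp Require Import all_boot all_order all_algebra.
From mathcomp Require Import all_classical all_reals all_analysis.
Set Implicit Arguments. Unset Strict Implicit. Unset Printing Implicit Defensive.
Import Order.TTheory GRing.Theory Num.Theory.
Import numFieldNormedType.Exports.
Local Open Scope classical_set_scope.
Local Open Scope ring_scope.
Local Open Scope ereal_scope.

Section markov_defs.
Context {d : measure_display} {T : measurableType d} {R : realType}.

Fixpoint kpow (K : T -> set T -> \bar R) (n : nat) (x : T) (B : set T) : \bar R :=
  match n with
  | 0%N => (\1_B x)%:E
  | n'.+1 => \int[K x]_y kpow K n' y B
  end.

Definition irr_measure (K : T -> set T -> \bar R)
    (phi : {measure set T -> \bar R}) : Prop :=
  forall A, measurable A -> 0 < phi A ->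
    forall x, exists n, (0 < n)%N /\ 0 < kpow K n x A.

Definition phi_irreducible (K : T -> set T -> \bar R) : Prop :=
  exists phi : {measure set T -> \bar R}, 0 < phi setT /\ irr_measure K phi.

Definition max_irr_measure (K : T -> set T -> \bar R)
    (psi : {measure set T -> \bar R}) : Prop :=
  irr_measure K psi /\
  forall phi : {measure set T -> \bar R}, irr_measure K phi ->
    forall A, measurable A -> psi A = 0 -> phi A = 0.

Definition dcycle (K : T -> set T -> \bar R) (psi : {measure set T -> \bar R})
    (p : nat) (D : nat -> set T) : Prop :=
  [/\ forall i, (i < p)%N -> measurable (D i),
      forall i j, (i < p)%N -> (j < p)%N -> i <> j -> D i `&` D j = set0,
      forall i, (i < p)%N -> forall x, D i x -> K x (D (i.+1 %% p)%N) = 1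
    & psi (~` \bigcup_(i in [set i | (i < p)%N]) D i) = 0].

(** aperiodic: the period (largest p admitting a p-cycle) is 1, i.e. there is
    no p-cycle with p >= 2 *)
Definition aperiodic (K : T -> set T -> \bar R) : Prop :=
  forall psi, max_irr_measure K psi ->
    forall p, (2 <= p)%N -> ~ exists D, dcycle K psi p D.

Definition small_set (K : T -> set T -> \bar R) (C : set T) : Prop :=
  [/\ measurable C,
      exists psi, max_irr_measure K psi /\ 0 < psi C
    & exists (m : nat) (delta : R) (nu : {measure set T -> \bar R}),
      [/\ (1 <= m)%N, (0 < delta < 1)%R, 0 < nu setT &
        forall x, C x -> forall B, measurable B ->
          delta%:E * nu B <= kpow K m x B]].

Definition petite (Q : T -> set T -> \bar R) (C : set T) : Prop :=
  exists (a : nat -> R) (kappa : {measure set T -> \bar R}),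
    [/\ forall n, (0 <= a n)%R,
        \sum_(0 <= n <oo) (a n)%:E = 1,
        0 < kappa setT &
        forall x, C x -> forall B, measurable B ->
          kappa B <= \sum_(0 <= n <oo) (a n)%:E * kpow Q n x B].

End markov_defs.

(** one-step kernel of the sampled process: P^{T_1}(x,B) = sum_k Pr(T_1=k) P^k(x,B) *)
Definition sampled_kernel {d dO : measure_display} {T : measurableType d}
    {Om : measurableType dO} {R : realType}
    (P : T -> set T -> \bar R) (Pr : probability Om R) (Tm : nat -> Om -> nat)
    : T -> set T -> \bar R :=
  fun x B => (\sum_(0 <= k <oo) Pr (Tm 1%N @^-1` [set k]) * kpow P k x B)%E.

(* Main.v *)
Require Import Defs.
From HB Require Import structures.
From mathcomp Require Import all_boot all_order all_algebra.
From mathcomp Require Import all_classical all_reals all_analysis.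
From mathcomp Require Import measurable_realfun.
Import Order.TTheory GRing.Theory Num.Theory.
Import numFieldNormedType.Exports.
Local Open Scope classical_set_scope.
Local Open Scope ring_scope.
Set Implicit Arguments. Unset Strict Implicit. Unset Printing Implicit Defensive.
Section intfam.
Local Open Scope ereal_scope.
Context d (T : measurableType d) (R : realType).

Lemma intfam_measure (mu : {measure set T -> \bar R}) (f : T -> set T -> \bar R)
  (mf : forall B, measurable B -> measurable_fun [set: T] (fun x => f x B))
  (f0 : forall y, f y set0 = 0) (fge0 : forall y B, 0 <= f y B)
  (fsa : forall y, semi_sigma_additive (f y)) :
  [/\ \int[mu]_y f y set0 = 0, (forall B, 0 <= \int[mu]_y f y B) &
      semi_sigma_additive (fun B => \int[mu]_y f y B)].
Proof.
split.
- by rewrite (eq_integral (cst 0)) ?integral0// => y _; rewrite f0.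
- by move=> B; exact: integral_ge0.
move=> U mU tU mUU; rewrite [X in _ --> X](_ : _ =
  \int[mu]_y (\sum_(n <oo) f y (U n))); last first.
  apply: eq_integral => V _.
  by apply/esym/cvg_lim => //; exact/fsa.
apply/cvg_closeP; split.
  by apply: is_cvg_nneseries => n _ _; exact: integral_ge0.
rewrite closeE// integral_nneseries// => n.
exact: mf.
Qed.
End intfam.
Section kpowgen.
Local Open Scope ereal_scope.
Context d (T : measurableType d) (R : realType).
Variable K : T -> {measure set T -> \bar R}.
Hypothesis mK : forall U, measurable U -> measurable_fun [set: T] (fun x => K x U).

Lemma kpow0_dirac x : kpow (fun x => K x) 0 x = \d_x.
Proof. by []. Qed.

Lemma kpow_props n :
  [/\ forall B, measurable B -> measurable_fun [set: T] (fun x => kpow (fun x => K x) n x B),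
      forall x, kpow (fun x => K x) n x set0 = 0,
      forall x B, 0 <= kpow (fun x => K x) n x B &
      forall x, semi_sigma_additive (kpow (fun x => K x) n x)].
Proof.
elim: n => [|n [IH1 IH2 IH3 IH4]].
  split.
  - move=> B mB /=; apply/measurable_EFinP; exact: measurable_indic.
  - by move=> x; rewrite kpow0_dirac measure0.
  - by move=> x B; rewrite kpow0_dirac.
  - by move=> x; rewrite kpow0_dirac; exact: measure_semi_sigma_additive.
have H x := intfam_measure (K x) IH1 IH2 IH3 IH4.
split.
- move=> B mB /=; apply: (measurable_fun_integral_kernel (l := K)) => //.
  exact: IH1.
- by move=> x; have [] := H x.
- by move=> x; have [] := H x.
- by move=> x; have [] := H x.
Qed.
End kpowgen.
Section kpowpack.
Local Open Scope ereal_scope.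
Context d (T : measurableType d) (R : realType).
Variable K : T -> {measure set T -> \bar R}.
Hypothesis mK : forall U, measurable U -> measurable_fun [set: T] (fun x => K x U).

Definition kpf (n : nat) (x : T) : set T -> \bar R := kpow (fun x => K x) n x.

Let kpf0 n x : kpf n x set0 = 0. Proof. by have [] := kpow_props mK n. Qed.
Let kpf_ge0 n x B : 0 <= kpf n x B. Proof. by have [] := kpow_props mK n. Qed.
Let kpf_sa n x : semi_sigma_additive (kpf n x). Proof. by have [] := kpow_props mK n. Qed.

HB.instance Definition _ n x := isMeasure.Build _ _ R (kpf n x) (kpf0 n x) (kpf_ge0 n x) (@kpf_sa n x).

Definition kpm n : T -> {measure set T -> \bar R} := fun x => kpf n x.

Let kpm_meas n U : measurable U -> measurable_fun [set: T] (kpm n ^~ U).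
Proof. by have [] := kpow_props mK n; move=> h _ _ _ mU; exact: h. Qed.

HB.instance Definition _ n := isKernel.Build _ _ T T R (kpm n) (@kpm_meas n).
End kpowpack.

Section kpowprob.
Local Open Scope ereal_scope.
Context d (T : measurableType d) (R : realType).
Variable P : R.-pker T ~> T.
Let mP : forall U, measurable U -> measurable_fun [set: T] (fun x => P x U).
Proof. move=> U mU; exact: measurable_kernel. Qed.

Lemma kpow_setT n x : kpow (fun x => P x) n x setT = 1.
Proof.
elim: n x => [|n IH] x /=; first by rewrite indicE mem_set.
under eq_integral do rewrite IH.
by rewrite integral_cst// mul1e prob_kernel.
Qed.

Definition kpP n := kpm mP n.
Let kpP1 n x : kpP n x setT = 1. Proof. exact: kpow_setT. Qed.
HB.instance Definition _ n := Kernel.on (kpP n).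
HB.instance Definition _ n := Kernel_isProbability.Build _ _ T T R (kpP n) (kpP1 n).


Lemma kpow_meas n B : measurable B ->
  measurable_fun [set: T] (fun x => kpow (fun x => P x) n x B).
Proof. by have [] := kpow_props mP n; move=> h _ _ _; exact: h. Qed.

Lemma kpow_ge0 n x B : 0 <= kpow (fun x => P x) n x B.
Proof. by have [] := kpow_props mP n. Qed.

Lemma CK a b x B : measurable B ->
  kpow (fun x => P x) (a + b) x B =
  \int[kpP a x]_z kpow (fun x => P x) b z B.
Proof.
move=> mB; elim: a x => [|a IH] x.
  rewrite add0n.
  have -> : (kpP 0 x : set T -> \bar R) = \d_x by [].
  by rewrite integral_dirac ?diracT ?mul1e //; exact: kpow_meas.
rewrite addSn /=.
under eq_integral do rewrite IH.
have -> : (kpP a.+1 x : set T -> \bar R) = kcomp P (kernel.kernel_snd (T0 := T) (kpP a)) x by [].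
rewrite integral_kcomp //; last exact: kpow_meas.
by move=> z; exact: kpow_ge0.
Qed.
End kpowprob.

Lemma term_le_series (R : realType) (u : nat -> \bar R) k :
  (forall n, 0 <= u n)%E -> (u k <= \sum_(0 <= i <oo) u i)%E.
Proof.
move=> u0; apply: le_trans (nneseries_lim_ge k.+1 _); last by move=> *.
rewrite big_nat_recr //= leeDr //; exact: sume_ge0.
Qed.

Section sampled.
Local Open Scope ereal_scope.
Context d dO (T : measurableType d) (Om : measurableType dO) (R : realType).
Variables (P : R.-pker T ~> T) (Pr : probability Om R) (Tm : nat -> Om -> nat).
Hypothesis hTm : forall n k, measurable (Tm n @^-1` [set k]).

Definition Ak k := Tm 1%N @^-1` [set k].

Lemma pfin k : Pr (Ak k) \is a fin_num.
Proof.
rewrite ge0_fin_numE //; exact: (le_lt_trans (probability_le1 Pr (hTm 1 k)) (ltry 1)).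
Qed.

Definition pk k : {nonneg R} := NngNum (fine_ge0 (measure_ge0 Pr (Ak k))).

Lemma pkE k : (pk k)%:num%:E = Pr (Ak k).
Proof. exact: fineK (pfin k). Qed.

Definition Qm (x : T) : {measure set T -> \bar R} :=
  mseries (fun k => mscale (pk k) (kpP P k x)) 0.

Lemma test3 x B k : (pk k)%:num%:E * kpP P k x B = Pr (Ak k) * kpow (fun x => P x) k x B.
Proof. by rewrite pkE. Qed.

Lemma QmE : (fun x => (Qm x : set T -> \bar R)) = sampled_kernel (fun x => P x) Pr Tm.
Proof.
apply: boolp.funext => x; apply: boolp.funext => B.
rewrite /sampled_kernel.
transitivity (\sum_(0 <= k <oo) (pk k)%:num%:E * kpP P k x B); first by [].
apply: eq_eseriesr => k _; exact: test3.
Qed.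

Lemma mQm U : measurable U -> measurable_fun [set: T] (fun x => Qm x U).
Proof.
move=> mU.
have -> : (fun x => Qm x U) = (fun x => \sum_(0 <= k <oo) (pk k)%:num%:E * kpP P k x U).
  by apply: boolp.funext.
apply: ge0_emeasurable_sum.
- by move=> k y _ _; rewrite mule_ge0.
- move=> k _; apply: measurable_funeM; exact: (measurable_kernel (kpP P k)).
Qed.

Lemma Qm_ge k0 x S : measurable S -> mscale (pk k0) (kpP P k0 x) S <= Qm x S.
Proof.
move=> mS.
have -> : Qm x S = \sum_(0 <= k <oo) (pk k)%:num%:E * kpP P k x S by [].
rewrite /mscale.
have h : forall n, 0 <= (pk n)%:num%:E * kpP P n x S by move=> n; rewrite mule_ge0.
exact: (@term_le_series R _ k0 h).
Qed.

Lemma helper_ge0 (c : R) m y B : (0 <= c)%R -> 0 <= c%:E * kpow (fun x => P x) m y B.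
Proof. by move=> c0; rewrite mule_ge0 ?lee_fin //; exact: kpow_ge0. Qed.

Lemma L1 k0 n (x : T) (B : set T) : measurable B ->
  ((((pk k0)%:num ^+ n)%R)%:E * kpow (fun x => P x) (n * k0) x B
   <= kpow (fun x => Qm x) n x B).
Proof.
move=> mB; elim: n x => [|n IH] x.
  by rewrite expr0 mul1e mul0n.
rewrite mulSn CK // exprS EFinM -muleA.
rewrite -ge0_integralZl //; last 2 first.
  exact: kpow_meas.
  by move=> y _; exact: kpow_ge0.
rewrite -ge0_integral_mscale //; last 2 first.
  by apply: measurable_funeM; exact: kpow_meas.
  by move=> y Hy; apply: helper_ge0; rewrite exprn_ge0.
apply: le_trans (ge0_le_measure_integral (m1 := mscale (pk k0) (kpP P k0 x)) (m2 := Qm x) _ _ _ _) _.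
all: try solve [ by move=> ? ?; apply: helper_ge0; rewrite exprn_ge0
  | by move=> ?; apply: helper_ge0; rewrite exprn_ge0
  | by apply: measurable_funeM; exact: kpow_meas
  | by move=> ? ?; exact: Qm_ge
  | by [] ].
apply: ge0_le_integral => //.
all: try solve [ by move=> ? ?; apply: helper_ge0; rewrite exprn_ge0
  | by move=> ?; apply: helper_ge0; rewrite exprn_ge0
  | by apply: measurable_funeM; exact: kpow_meas
  | by have [h _ _ _] := kpow_props mQm n; exact: (h B mB)
  | by move=> ? ?; exact: IH ].
Qed.
End sampled.

Lemma series_single (R : realType) (f : nat -> \bar R) m :
  (forall n, n != m -> f n = 0%E) -> (\sum_(0 <= n <oo) f n = f m)%E.
Proof.
move=> h; apply: lim_near_cst => //; near=> n.
have hn : (m < n)%N by near: n; exists m.+1.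
rewrite (big_cat_nat (n := m.+1)) //= big_nat_recr //= big1_seq ?add0e.
  rewrite big1_seq ?adde0 // => i /andP[_]; rewrite mem_index_iota => /andP[mi _].
  by apply: h; rewrite neq_ltn mi orbT.
move=> i /andP[_]; rewrite mem_index_iota => /andP[_ im].
by apply: h; rewrite neq_ltn im.
Unshelve. all: by end_near.
Qed.

Section nuK.
Local Open Scope ereal_scope.
Context d (T : measurableType d) (R : realType).
Variables (P : R.-pker T ~> T) (nu : {measure set T -> \bar R}) (j : nat).
Definition nuKf (B : set T) := \int[nu]_z kpow (fun x => P x) j z B.
Let mP : forall U, measurable U -> measurable_fun [set: T] (fun x => P x U).
Proof. move=> U mU; exact: measurable_kernel. Qed.
Let H := (fun '(And4 a b c e) => intfam_measure nu a b c e) (kpow_props mP j).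
Let nuK0 : nuKf set0 = 0. Proof. by have [] := H. Qed.
Let nuK_ge0 B : 0 <= nuKf B. Proof. by have [_ h _] := H; exact: h. Qed.
Let nuK_sa : semi_sigma_additive nuKf. Proof. by have [_ _ h] := H; exact: h. Qed.
HB.instance Definition _ := isMeasure.Build _ _ R nuKf nuK0 nuK_ge0 nuK_sa.
End nuK.

Theorem mainTheorem2 (d dO : measure_display) (T : measurableType d)
    (Om : measurableType dO) (R : realType)
    (P : R.-pker T ~> T) (Pr : probability Om R) (Tm : nat -> Om -> nat)
    (hTm_meas : forall n k, measurable (Tm n @^-1` [set k]))
    (hT0 : forall w, Tm 0%N w = 0%N)
    (hTmono : forall n w, (Tm n w <= Tm n.+1 w)%N)
    (hTnondeg : (Pr (Tm 1%N @^-1` [set 0%N]) < 1)%E)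
    (hirr : phi_irreducible (fun x => P x))
    (haper : aperiodic (fun x => P x))
    (C : set T) :
  small_set (fun x => P x) C ->
  petite (sampled_kernel (fun x => P x) Pr Tm) C.
Proof.
move=> [mC _ [m [delta [nu [m1 /andP[d0 d1] nu0 minor]]]]].
have [k0 [k0pos Pk0]] : exists k0, (0 < k0)%N /\ (0 < Pr (Ak Tm k0))%E.
  apply: contrapT => H.
  have Z : forall k, (0 < k)%N -> Pr (Ak Tm k) = 0%E.
    move=> k kp; apply/eqP; rewrite eq_le measure_ge0 andbT leNgt.
    by apply/negP => hk; apply: H; exists k.
  have U0 : Pr (\bigcup_(k in [set k | (0 < k)%N]) Ak Tm k) = 0%E.
    rewrite measure_bigcup //=.
    - by apply: eseries0 => i _; rewrite inE => ip; exact: Z.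
    - by move=> i _; exact: hTm_meas.
    - by move=> i j _ _ [w [/= <- <-]].
  have E : [set: Om] = Ak Tm 0 `|` \bigcup_(k in [set k | (0 < k)%N]) Ak Tm k.
    apply/seteqP; split => w // _.
    case E: (Tm 1%N w) => [|k]; [left|right; exists k.+1] => //.
  have := probability_setT Pr.
  rewrite E measureU0 //; last 2 first.
  - exact: hTm_meas.
  - by apply: bigcup_measurable => k _; exact: hTm_meas.
  move=> h; rewrite /Ak in h.
  by move: hTnondeg; rewrite h ltxx.
set c := (pk Pr Tm k0)%:num.
have c0 : (0 < c)%R by rewrite -lte_fin /c pkE.
have hle : (m <= m * k0)%N by rewrite leq_pmulr.
set j := (m * k0 - m)%N.
have cd0 : (0 <= c ^+ m * delta)%R by rewrite mulr_ge0 ?exprn_ge0 ?ltW.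
pose kappa : {measure set T -> \bar R} := mscale (NngNum cd0) (nuKf P nu j).
pose a := fun n : nat => if n == m then 1%R else 0%R : R.
exists a, kappa; split.
- by move=> n; rewrite /a; case: ifP.
- rewrite (series_single (m:=m)); first by rewrite /a eqxx.
  by move=> n /negbTE; rewrite /a => ->.
- have -> : kappa setT = ((c ^+ m * delta)%R%:E * \int[nu]_z kpow (fun x => P x) j z setT)%E by [].
  rewrite (eq_integral (cst 1%E)); last by move=> z _; rewrite kpow_setT.
  rewrite integral_cst // mul1e; apply: mule_gt0 => //.
  by rewrite lte_fin mulr_gt0 ?exprn_gt0.
move=> x Cx B mB.
rewrite (series_single (m:=m)); last by move=> n /negbTE; rewrite /a => ->; rewrite mul0e.
rewrite /a eqxx mul1e -QmE.
apply: le_trans (L1 P Pr Tm k0 m x mB).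
have -> : kappa B = ((c ^+ m * delta)%R%:E * \int[nu]_z kpow (fun x => P x) j z B)%E by [].
rewrite EFinM -muleA; apply: lee_wpmul2l.
  by rewrite lee_fin exprn_ge0 // ltW.
rewrite -[(m * k0)%N](subnKC hle) CK //.
have d0' : (0 <= delta)%R by exact: ltW.
rewrite -[delta%:E]/((NngNum d0')%:num%:E).
rewrite -ge0_integral_mscale //; last 2 first.
- exact: kpow_meas.
- by move=> y Hy; exact: kpow_ge0.
- apply: ge0_le_measure_integral => //.
  + by move=> S mS; exact: minor.
  + by move=> y; exact: kpow_ge0.
  + exact: kpow_meas.
- exact: hTm_meas.
Qed.
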